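(* For any nonzero ring $R$ and any integer $n\ge 2$, the matrix ring $\mathrm{M}_n(R)$ is not a CSNC ring.
   Context: All rings are associative with identity $1$. For a ring $R$, $\mathrm{Id}(R)$, $U(R)$, $\mathrm{Nil}(R)$ denote the sets of idempotents, units and nilpotent elements. An element $a\in R$ is clean if $a=e+u$ for some $e\in\mathrm{Id}(R)$, $u\in U(R)$. An element $a$ is strongly nil-clean if $a=e+q$ with $e\in \mathrm{Id}(R)$, $q\in\mathrm{Nil}(R)$ and $eq=qe$. A ring $R$ is called CSNC if every clean element of $R$ is strongly nil-clean. *)

(* Defs.v *)
From mathcomp Require Import all_boot all_order all_algebra.
Set Implicit Arguments. Unset Strict Implicit. Unset Printing Implicit Defensive.
Import GRing.Theory.
Local Open Scope ring_scope.

Definition is_idempotent (R : pzRingType) (e : R) : Prop := e * e = e.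
Definition is_unit_el (R : pzRingType) (u : R) : Prop :=
  exists v : R, u * v = 1 /\ v * u = 1.
Definition is_nilpotent (R : pzRingType) (q : R) : Prop :=
  exists m : nat, q ^+ m = 0.

Definition clean_el (R : pzRingType) (a : R) : Prop :=
  exists e u : R, is_idempotent e /\ is_unit_el u /\ a = e + u.

Definition strongly_nil_clean_el (R : pzRingType) (a : R) : Prop :=
  exists e q : R, is_idempotent e /\ is_nilpotent q /\ e * q = q * e /\ a = e + q.

Definition CSNC (R : pzRingType) : Prop :=
  forall a : R, clean_el a -> strongly_nil_clean_el a.

(* Main.v *)
Require Import Defs.
From mathcomp Require Import all_boot all_order all_algebra.
Set Implicit Arguments. Unset Strict Implicit. Unset Printing Implicit Defensive.
Import GRing.Theory.
Local Open Scope ring_scope.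

Lemma snc_nil (R : pzRingType) (x : R) :
  strongly_nil_clean_el x -> is_nilpotent (x - x * x).
Proof.
move=> [e [q [He [[m Hq] [Heq ->]]]]].
exists m.
have -> : (e + q) - (e + q) * (e + q) = q * (1 - e *+ 2 - q).
  rewrite mulrDl !mulrDr He mulr1 !mulrN mulrnAr -Heq mulr2n.
  by rewrite !opprD !addrA (addrAC e q) subrr add0r.
rewrite exprMn_comm ?Hq ?mul0r //.
rewrite /GRing.comm !mulrBr !mulrBl mulr1 mul1r mulrnAr mulrnAl Heq //.
Qed.

Lemma acl (V : zmodType) (x y z w t : V) : x + y + z + (w + t) = y + w + z + (x + t).
Proof. rewrite -!addrA (addrCA x); congr (_ + _).
rewrite (addrCA x) (addrCA w) (addrCA x). done. Qed.

Theorem mainTheorem17 (R : nzRingType) (k : nat) : ~ CSNC ('M[R]_(k.+2) : pzRingType).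
Proof.
move=> H.
pose i0 : 'I_(k.+2) := ord0.
pose i1 : 'I_(k.+2) := Ordinal (isT : (1 < k.+2)%N).
pose E (i j : 'I_(k.+2)) : 'M[R]_(k.+2) := delta_mx i j.
have EM : forall i j l m, E i j * E l m = E i m *+ (j == l).
  by move=> i j l m; rewrite /E -mulmxE mul_delta_mx_cond.
have n01 : (i0 == i1) = false by [].
have n10 : (i1 == i0) = false by [].
pose a := E i0 i1 + E i1 i0 + E i1 i1.
pose f := E i0 i0 + E i1 i1.
have aa : a * a = a + f.
  rewrite /a /f !mulrDl !mulrDr !EM n01 n10 !eqxx !mulr0n !mulr1n !addr0 !add0r.
  by rewrite acl.
have ff : f * f = f.
  by rewrite /f !mulrDl !mulrDr !EM n01 n10 !eqxx !mulr0n !mulr1n !addr0 !add0r.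
have fa : f * a = a.
  by rewrite /a /f !mulrDl !mulrDr !EM n01 n10 !eqxx !mulr0n !mulr1n !addr0 !add0r addrA.
have af : a * f = a.
  by rewrite /a /f !mulrDl !mulrDr !EM n01 n10 !eqxx !mulr0n !mulr1n !addr0 !add0r.
have f0 : f != 0.
  apply/eqP => /matrixP/(_ i0 i0); by rewrite !mxE /= addr0 => /eqP; rewrite oner_eq0.
clearbody a f.
have Ha : clean_el a.
  exists (1 - f), (a + f - 1); split; last split.
  - by rewrite /is_idempotent mulrBl mul1r mulrBr mulr1 ff subrr subr0.
  - exists (a - 1); split.
    + by rewrite mulrBr mulr1 !mulrBl !mulrDl aa fa mul1r addrK opprB addrC subrK.
    + by rewrite mulrBl mul1r !mulrBr !mulrDr aa af mulr1 addrK opprB addrC subrK.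
  - by rewrite addrC addrA subrK addrK.
have [m Hm] := snc_nil (H a Ha).
move: Hm; rewrite (_ : a - a * a = - f); last by rewrite aa opprD addrA subrr add0r.
 rewrite exprNn => Hm.
have {Hm} Hm : f ^+ m = 0 by rewrite -(signrMK m (f ^+ m)) Hm mulr0.
have fe : forall n, f ^+ n.+1 = f.
  by elim=> [|n IH]; rewrite ?expr1 // exprS IH ff.
case: m Hm => [|m]; first by rewrite expr0 => /eqP; rewrite oner_eq0.
by rewrite fe => /eqP; apply/negP.
Qed.
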